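(* For every division ring $K$, every torsion-free group $G$ and every integer $n\ge2$, there are no $a,b\in K[G]$ with $\operatorname{rank}(a)=2$, $\operatorname{rank}(b)=n$ and $ab=1$.
   Context: $K[G]$ is the group ring; the rank of an element is the number of group elements with nonzero coefficient. A group is torsion-free if its only element of finite order is the identity. *)

(* Defs.v *)
From Stdlib Require List.
From mathcomp Require Import all_boot all_order all_algebra.
Set Implicit Arguments. Unset Strict Implicit. Unset Printing Implicit Defensive.
Import GRing.Theory.
Local Open Scope ring_scope.

Definition is_group (G : Type) (mul : G -> G -> G) (inv : G -> G) (e : G) : Prop :=
  (forall x y z, mul x (mul y z) = mul (mul x y) z) /\
  (forall x, mul e x = x) /\ (forall x, mul x e = x) /\
  (forall x, mul (inv x) x = e) /\ (forall x, mul x (inv x) = e).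

Fixpoint gpow (G : Type) (mul : G -> G -> G) (e : G) (x : G) (n : nat) : G :=
  match n with O => e | S m => mul x (gpow mul e x m) end.

Definition torsion_free (G : Type) (mul : G -> G -> G) (e : G) : Prop :=
  forall (x : G) (n : nat), (0 < n)%N -> gpow mul e x n = e -> x = e.

Definition is_division_ring (K : unitRingType) : Prop :=
  forall x : K, x != 0 -> x \is a GRing.unit.

(* Elements of K[G] are functions G -> K with finite support.
   rank a = n: exactly n distinct group elements have nonzero coefficient. *)
Definition gr_rank (G : Type) (K : unitRingType) (a : G -> K) (n : nat) : Prop :=
  exists s : seq G, List.NoDup s /\ size s = n /\
    (forall g, a g != 0 <-> List.In g s).

(* Coefficient of (a * b) at g, computed over a duplicate-free list s
   containing the support of a:  (ab)(g) = sum_h a(h) b(h^-1 g). *)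
Definition gr_conv (G : Type) (K : unitRingType) (mul : G -> G -> G) (inv : G -> G)
  (s : seq G) (a b : G -> K) (g : G) : K :=
  \sum_(h <- s) a h * b (mul (inv h) g).

Definition gr_prod_is_one (G : Type) (K : unitRingType) (mul : G -> G -> G)
  (inv : G -> G) (e : G) (a b : G -> K) : Prop :=
  exists s : seq G, List.NoDup s /\ (forall h, a h != 0 -> List.In h s) /\
    forall g, (g = e -> gr_conv mul inv s a b g = 1) /\
              (g <> e -> gr_conv mul inv s a b g = 0).

(* Main.v *)
Require Import Defs.
From mathcomp Require Import all_boot all_order all_algebra.
From Stdlib Require Import Classical ClassicalEpsilon Lia FinFun.
From mathcomp Require Import zify.
Set Implicit Arguments. Unset Strict Implicit. Unset Printing Implicit Defensive.
Import GRing.Theory.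
Local Open Scope ring_scope.

Lemma sum_zero (G : Type) (K : unitRingType) (F : G -> K) (s : seq G) :
  (forall h, List.In h s -> F h = 0) -> \sum_(h <- s) F h = 0.
Proof.
elim: s => [|h s IH] H; first by rewrite big_nil.
rewrite big_cons H /=; last by left.
rewrite add0r IH // => h' Hh'; apply: H; by right.
Qed.

Lemma sum_single (G : Type) (K : unitRingType) (F : G -> K) (x : G) (s : seq G) :
  List.NoDup s -> List.In x s -> (forall h, List.In h s -> h <> x -> F h = 0) ->
  \sum_(h <- s) F h = F x.
Proof.
elim: s => [|h s IH] Hnd Hin H; first by case: Hin.
apply List.NoDup_cons_iff in Hnd; case: Hnd => Hhs Hnd.
rewrite big_cons.
destruct (classic (h = x)) as [<-|Hhx].
  rewrite sum_zero ?addr0 // => h' Hh'; apply: H; first by right.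
  by move=> E; subst h'.
rewrite H /=; [|by left|by []].
rewrite add0r IH //.
  by case: Hin.
move=> h' Hh' Hne; apply: H => //; by right.
Qed.

Lemma sum_two (G : Type) (K : unitRingType) (F : G -> K) (x y : G) (s : seq G) :
  x <> y -> List.NoDup s -> List.In x s -> List.In y s ->
  (forall h, List.In h s -> h <> x -> h <> y -> F h = 0) ->
  \sum_(h <- s) F h = F x + F y.
Proof.
move=> Hxy Hnd Hx Hy H.
pose Fx := fun h => if excluded_middle_informative (h = x) then F h else 0.
pose Fy := fun h => if excluded_middle_informative (h = x) then 0 else F h.
have -> : \sum_(h <- s) F h = \sum_(h <- s) (Fx h + Fy h).
  apply: eq_bigr => h _; rewrite /Fx /Fy.
  by case: excluded_middle_informative => ?; rewrite ?addr0 ?add0r.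
rewrite big_split /=.
rewrite (@sum_single _ _ Fx x) //; last first.
  by move=> h _ Hne; rewrite /Fx; case: excluded_middle_informative.
rewrite (@sum_single _ _ Fy y) //; last first.
  move=> h Hh Hne; rewrite /Fy; case: excluded_middle_informative => // Hhx.
  exact: H.
rewrite /Fx /Fy.
case: excluded_middle_informative => // ?.
by case: excluded_middle_informative => // E; case: Hxy.
Qed.

Section GroupFacts.
Lemma gpow_add (G : Type) (mul : G -> G -> G) (inv : G -> G) (e : G) :
  is_group mul inv e -> forall x k m,
  gpow mul e x (k + m) = mul (gpow mul e x k) (gpow mul e x m).
Proof.
move=> [Ha [Hl [Hr [Hil Hir]]]] x; elim=> [|k IH] m /=; first by rewrite Hl.
by rewrite IH Ha.
Qed.

Lemma cancel_r (G : Type) (mul : G -> G -> G) (inv : G -> G) (e : G) :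
  is_group mul inv e -> forall a b c, mul a c = mul b c -> a = b.
Proof.
move=> [Ha [Hl [Hr [Hil Hir]]]] a b c E.
by rewrite -(Hr a) -(Hr b) -(Hir c) !Ha E.
Qed.

Lemma cancel_l (G : Type) (mul : G -> G -> G) (inv : G -> G) (e : G) :
  is_group mul inv e -> forall a b c, mul c a = mul c b -> a = b.
Proof.
move=> [Ha [Hl [Hr [Hil Hir]]]] a b c E.
by rewrite -(Hl a) -(Hl b) -(Hil c) -!Ha E.
Qed.
End GroupFacts.

Lemma chain_inj (G : Type) (mul : G -> G -> G) (inv : G -> G) (e : G) t h0 :
  is_group mul inv e -> torsion_free mul e -> t <> e ->
  forall k m, mul (gpow mul e t k.+1) h0 = mul (gpow mul e t m.+1) h0 -> k = m.
Proof.
move=> Hg Htf Hte.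
have key : forall k m, (k < m)%coq_nat ->
    mul (gpow mul e t k.+1) h0 = mul (gpow mul e t m.+1) h0 -> False.
  move=> k m Hkm E.
  have E2 := cancel_r Hg E.
  have Hm : m.+1 = (k.+1 + (m - k)%N)%N by lia.
  rewrite Hm (gpow_add Hg) in E2.
  have E3 : gpow mul e t (m - k)%N = e.
    apply: (cancel_l Hg (c := gpow mul e t k.+1)).
    case: Hg => [_ [_ [Hr _]]]; by rewrite Hr.
  apply: Hte; apply: (Htf t (m - k)%N) => //; lia.
move=> k m E.
destruct (Compare_dec.lt_eq_lt_dec k m) as [[H|H]|H] => //.
  by case: (key _ _ H E).
by case: (key _ _ H (esym E)).
Qed.

Lemma chain_false (G : Type) (K : unitRingType) (mul : G -> G -> G) (inv : G -> G)
  (e : G) (b : G -> K) (sb : seq G) t h0 :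
  is_group mul inv e -> torsion_free mul e -> t <> e ->
  (forall g, b g != 0 <-> List.In g sb) ->
  (forall k, b (mul (gpow mul e t k.+1) h0) != 0) -> False.
Proof.
move=> Hg Htf Hte Hb Hk.
pose f := fun k => mul (gpow mul e t k.+1) h0.
pose l := List.map f (List.seq 0 (size sb).+1).
have Hnd : List.NoDup l.
  apply: FinFun.Injective_map_NoDup; last exact: List.seq_NoDup.
  move=> k m; exact: chain_inj Hg Htf Hte k m.
have Hincl : List.incl l sb.
  move=> g /List.in_map_iff [k [<- _]]; apply/Hb; exact: Hk.
have := List.NoDup_incl_length Hnd Hincl.
rewrite /l List.length_map List.length_seq.
have -> : List.length sb = size sb by by clear; elim: sb => //= ? ? ->.
lia.
Qed.

Lemma nz_mul (K : unitRingType) : is_division_ring K ->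
  forall x y : K, x != 0 -> y != 0 -> x * y != 0.
Proof.
move=> Hd x y Hx Hy; apply/eqP => E.
by move/eqP: Hy; apply; rewrite -(mulKr (Hd x Hx) y) E mulr0.
Qed.

Lemma gpow_ne (G : Type) (mul : G -> G -> G) (inv : G -> G) (e : G) t u k :
  is_group mul inv e -> torsion_free mul e -> t <> e ->
  mul (gpow mul e t k.+1) u <> u.
Proof.
move=> Hg Htf Hte E; apply: Hte; apply: (Htf t k.+1) => //.
apply: (cancel_r Hg (c := u)); case: Hg => [_ [Hl _]]; by rewrite Hl.
Qed.

Theorem theorem6p2 (K : unitRingType) (G : Type)
  (mul : G -> G -> G) (inv : G -> G) (e : G) (n : nat) :
  is_division_ring K -> is_group mul inv e -> torsion_free mul e -> (2 <= n)%N ->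
  ~ (exists a b : G -> K,
       gr_rank a 2 /\ gr_rank b n /\ gr_prod_is_one mul inv e a b).
Proof.
move=> Hdiv Hg Htf _ [a [b [[sa [Hsa [Hsza Ha]]] [[sb [Hsb [Hszb Hb]]] [s [Hs [Hsup Hconv]]]]]]].
destruct sa as [|x [|y [|z sa]]]; try discriminate.
have Hxy : x <> y.
  move=> E; subst y; apply List.NoDup_cons_iff in Hsa; case: Hsa => H _; apply: H; by left.
have Hax : a x != 0 by apply/Ha; left.
have Hay : a y != 0 by apply/Ha; right; left.
have Ha0 : forall h, h <> x -> h <> y -> a h = 0.
  move=> h H1 H2; case: (eqVneq (a h) 0) => // /Ha [E|[E|[]]]; by [case: H1|case: H2].
have Hconv' : forall g, gr_conv mul inv s a b g =
    a x * b (mul (inv x) g) + a y * b (mul (inv y) g).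
  move=> g; rewrite /gr_conv.
  apply: (sum_two (F := fun h => a h * b (mul (inv h) g))) => //.
  - exact: Hsup.
  - exact: Hsup.
  - by move=> h _ H1 H2; rewrite Ha0 // mul0r.
case: (Hg) => [Hassoc [Hl [Hr [Hil Hir]]]].
pose t := mul (inv y) x.
pose u := inv x.
have Hte : t <> e.
  move=> E; apply: Hxy.
  by rewrite -(Hr y) -E /t Hassoc Hir Hl.
have E1 : forall h, h <> u -> a x * b h + a y * b (mul t h) = 0.
  move=> h Hh.
  have [_ H] := Hconv (mul x h).
  rewrite Hconv' !Hassoc Hil Hl in H; apply: H.
  move=> E; apply: Hh; by rewrite /u -(Hr (inv x)) -E Hassoc Hil Hl.
have E0 : a x * b u + a y * b (mul t u) = 1.
  have [H _] := Hconv e.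
  rewrite Hconv' !Hr in H.
  by rewrite /u /t -Hassoc Hir Hr; apply: H.
have Fwd : forall h, h <> u -> b h != 0 -> b (mul t h) != 0.
  move=> h Hh Hbh; apply/eqP => E; have := E1 h Hh; rewrite E mulr0 addr0.
  by apply/eqP; apply: nz_mul.
have Bwd : forall h, h <> u -> b (mul t h) != 0 -> b h != 0.
  move=> h Hh Hbh; apply/eqP => E; have := E1 h Hh; rewrite E mulr0 add0r.
  by apply/eqP; apply: nz_mul.
case: (eqVneq (b (mul t u)) 0) => Htu.
- rewrite Htu mulr0 addr0 in E0.
  have Hbu : b u != 0.
    apply/eqP => E; rewrite E mulr0 in E0; by move/eqP: (@oner_neq0 K); rewrite E0.
  pose t' := inv t.
  have Ht'e : t' <> e.
    move=> E; apply: Hte; by rewrite -(Hr t) -E /t' Hir.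
  apply: (chain_false (t := t') (h0 := u) Hg Htf Ht'e Hb).
  elim=> [|k IH].
  + rewrite /= Hr; apply: Bwd.
      move=> E; apply: Ht'e; apply: (cancel_r Hg (c := u)); by rewrite Hl.
    by rewrite Hassoc /t' Hir Hl.
  + have -> : mul (gpow mul e t' k.+2) u = mul t' (mul (gpow mul e t' k.+1) u).
      by rewrite -Hassoc.
    apply: Bwd.
      rewrite Hassoc; have := gpow_ne (k := k.+1) (u := u) Hg Htf Ht'e; by [].
    by rewrite Hassoc /t' Hir Hl.
- apply: (chain_false (t := t) (h0 := u) Hg Htf Hte Hb).
  elim=> [|k IH].
  + by rewrite /= Hr.
  + have -> : mul (gpow mul e t k.+2) u = mul t (mul (gpow mul e t k.+1) u).
      by rewrite -Hassoc.
    apply: Fwd; last exact: IH.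
    exact: (gpow_ne (k := k) (u := u) Hg Htf Hte).
Qed.
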